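(* Let $p$ be an odd prime and $E\subseteq\mathbb{Z}_p^2$. If $E$ tiles $\mathbb{Z}_p^2$ by translation, then $E$ is a spectral set.
   Context: $x\cdot a=x_1a_1+x_2a_2\pmod p$, $\chi(u)=e^{2\pi i u/p}$. $E$ tiles $\mathbb{Z}_p^2$ by translation if there is $T\subseteq\mathbb{Z}_p^2$ such that every $v\in\mathbb{Z}_p^2$ can be written uniquely as $v=e+t$ with $e\in E$, $t\in T$. $E$ is spectral if there is $A\subseteq\mathbb{Z}_p^2$ such that (Completeness) for every $f:E\to\mathbb{C}$ there are complex numbers $(c_a)_{a\in A}$ with $f(x)=\sum_{a\in A}c_a\chi(x\cdot a)$ for all $x\in E$, and (Orthogonality) $\sum_{x\in E}\chi(x\cdot(a-a'))=0$ for all distinct $a,a'\in A$. *)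

(* Defs.v *)
From mathcomp Require Import all_boot all_order all_algebra.
From mathcomp Require Import complex.
From mathcomp Require Import reals trigo.
From mathcomp Require Import Rstruct.
Set Implicit Arguments. Unset Strict Implicit. Unset Printing Implicit Defensive.
Import Order.TTheory GRing.Theory Num.Theory.
Local Open Scope ring_scope.
Local Open Scope complex_scope.

Definition Cx := (Rdefinitions.R)[i].

Definition pt (p : nat) := ('F_p * 'F_p)%type.

Definition dotp (p : nat) (x a : pt p) : 'F_p := x.1 * a.1 + x.2 * a.2.

(* chi(u) = exp(2 pi i u / p) = cos(2 pi u/p) + i sin(2 pi u/p), u taken as
   its representative in {0,...,p-1}. *)
Definition chi (p : nat) (u : 'F_p) : Cx :=
  let t : Rdefinitions.R := (2 * pi * (nat_of_ord u)%:R / p%:R)%R in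
  (cos t +i* sin t)%C.

Definition tiles (p : nat) (E : {set pt p}) : Prop :=
  exists T : {set pt p},
    forall v : pt p, exists! et : pt p * pt p,
      [/\ et.1 \in E, et.2 \in T & v = et.1 + et.2].

Definition spectral (p : nat) (E : {set pt p}) : Prop :=
  exists A : {set pt p},
    (forall f : pt p -> Cx, exists c : pt p -> Cx,
        forall x, x \in E -> f x = \sum_(a in A) c a * chi (dotp x a))
    /\ (forall a a', a \in A -> a' \in A -> a != a' ->
          \sum_(x in E) chi (dotp x (a - a')) = 0).

(* Main.v *)
Require Import Defs.
From mathcomp Require Import all_boot all_order all_algebra all_field.
From mathcomp Require Import complex Rstruct reals trigo zify ring.
Set Implicit Arguments. Unset Strict Implicit. Unset Printing Implicit Defensive.
Import Order.TTheory GRing.Theory Num.Theory.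

Module M1.
Local Open Scope ring_scope.
Local Open Scope complex_scope.

Local Notation RR := Rdefinitions.R.

Lemma cmul (a b c d : RR) : ((a +i* b) * (c +i* d) : Cx) = (a*c - b*d) +i* (a*d + b*c).
Proof. by []. Qed.

Lemma valD n (a b : 'I_n.+2) : nat_of_ord (a + b) = ((a + b) %% n.+2)%N.
Proof. by []. Qed.

Lemma chi_aux (p x y : nat) : (0 < p)%N -> (x < p)%N -> (y < p)%N ->
  let t (n : nat) : RR := (2 * pi * n%:R / p%:R)%R in
  ((cos (t ((x + y) %% p)%N) +i* sin (t ((x + y) %% p)%N)) : Cx) =
  (cos (t x) +i* sin (t x)) * (cos (t y) +i* sin (t y)).
Proof.
move=> p0 xp yp t; rewrite cmul -cosD [_ * _ + sin _ * _]addrC -sinD.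
have tD : t (x + y)%N = t x + t y by rewrite /t natrD !mulrDr !mulrDl.
case: (ltnP (x + y) p) => hxy.
  by rewrite modn_small // tD.
have -> : ((x + y) %% p = (x + y) - p)%N.
  rewrite -{1}(subnK hxy) modnDr modn_small //.
  lia.
have e : t (x + y - p)%N = t x + t y - pi *+ 2.
  rewrite -tD /t natrB // mulrBr mulrBl -[_ * p%:R / p%:R]mulrA mulfV ?mulr1.
    by rewrite mulr2n mulrDl mul1r.
  by rewrite pnatr_eq0 -lt0n.
by rewrite e -(cosD2pi (t x + t y - pi *+ 2)) -(sinD2pi (t x + t y - pi *+ 2)) subrK.
Qed.

Section Chi.
Variable p : nat.
Hypothesis pr : prime p.
Hypothesis podd : odd p.

Lemma p_gt2 : (2 < p)%N.
Proof. have := prime_gt1 pr; case: p podd => [|[|[|n]]] //. Qed.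

Lemma chiD (a b : 'F_p) : chi (a + b) = chi a * chi b.
Proof.
rewrite /chi valD.
have -> : (((a : nat) + b) %% (Zp_trunc (pdiv p)).+2 = ((a : nat) + b) %% p)%N.
  by congr (_ %% _)%N; rewrite Fp_cast.
apply: chi_aux; first exact: prime_gt0.
  by move: (ltn_ord a); rewrite [X in (_ < X)%N -> _]Fp_cast.
by move: (ltn_ord b); rewrite [X in (_ < X)%N -> _]Fp_cast.
Qed.

Lemma chi0 : chi (0 : 'F_p) = 1.
Proof. by rewrite /chi /= mulr0 mul0r cos0 sin0. Qed.

Lemma val_Fp1 : nat_of_ord (1 : 'F_p) = 1%N.
Proof. by rewrite /= modn_small. Qed.

Lemma chi1_neq1 : chi (1 : 'F_p) != 1.
Proof.
rewrite /chi val_Fp1 mulr1; apply/eqP => /(congr1 (@complex.Im _)) /= h.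
have p0 : (0 : RR) < p%:R by rewrite ltr0n prime_gt0.
have : (0:RR) < sin (2 * pi / p%:R).
  apply: sin_gt0_pi; apply/andP; split.
    by rewrite divr_gt0 // mulr_gt0 ?pi_gt0.
  rewrite ltr_pdivrMr // mulrC ltr_pM2l ?pi_gt0 // ltr_nat; exact: p_gt2.
by move/gt_eqF/eqP; apply; exact: h.
Qed.

Lemma chi_nat (n : nat) : chi (n%:R : 'F_p) = chi (1 : 'F_p) ^+ n.
Proof. by elim: n => [|n IH]; rewrite ?chi0 // -addn1 natrD chiD IH exprD expr1. Qed.

Lemma chi_val (u : 'F_p) : chi u = chi (1 : 'F_p) ^+ (nat_of_ord u).
Proof. by rewrite -chi_nat natr_Zp. Qed.

Lemma chi1_p : chi (1 : 'F_p) ^+ p = 1.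
Proof. by rewrite -chi_nat pchar_Fp_0 // chi0. Qed.


Lemma sum_chi0 : \sum_(u : 'F_p) chi u = 0.
Proof.
have e : \sum_(u : 'F_p) chi u = (\sum_(u : 'F_p) chi u) * chi (1 : 'F_p).
  rewrite mulr_suml [LHS](reindex_inj (addIr (1 : 'F_p))) /=.
  by apply: eq_bigr => u _; rewrite chiD.
have h : (\sum_(u : 'F_p) chi u) * (1 - chi (1 : 'F_p)) = 0.
  by rewrite mulrBr mulr1 -e subrr.
by move/eqP: h; rewrite mulf_eq0 subr_eq0 [1 == _]eq_sym (negbTE chi1_neq1) orbF => /eqP.
Qed.

Lemma sum_chiM (s : 'F_p) : s != 0 -> \sum_(t : 'F_p) chi (t * s) = 0.
Proof.
move=> sn0; transitivity (\sum_(u : 'F_p) chi u); last exact: sum_chi0.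
by rewrite [RHS](reindex_inj (mulIf sn0)).
Qed.

Lemma sum_dot0 (d : pt p) : d != 0 -> \sum_(x : pt p) chi (dotp x d) = 0.
Proof.
move=> dn0.
have -> : \sum_(x : pt p) chi (dotp x d) =
   (\sum_(i : 'F_p) chi (i * d.1)) * (\sum_(j : 'F_p) chi (j * d.2)).
  rewrite big_distrlr /= pair_bigA /=; apply: eq_bigr => x _.
  by rewrite /dotp chiD.
have : (d.1 != 0) || (d.2 != 0).
  by move: dn0; case: d => a b; rewrite xpair_eqE negb_and.
by case/orP => h; rewrite (sum_chiM h) ?mul0r ?mulr0.
Qed.

Lemma spectral_crit (E A : {set pt p}) : A != set0 ->
 (forall a a', a \in A -> a' \in A -> a != a' ->
      \sum_(x in E) chi (dotp x (a - a')) = 0) ->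
 (forall x y, x \in E -> y \in E -> y != x ->
      \sum_(a in A) chi (dotp x a - dotp y a) = 0) ->
 spectral E.
Proof.
move=> An0 horth hdual; exists A; split => // f.
exists (fun a => (#|A|%:R)^-1 * \sum_(y in E) f y * chi (- dotp y a)) => x xE.
have -> : \sum_(a in A) (#|A|%:R^-1 * \sum_(y in E) f y * chi (- dotp y a)) * chi (dotp x a)
   = #|A|%:R^-1 * \sum_(y in E) f y * \sum_(a in A) chi (dotp x a - dotp y a).
  under eq_bigr => a _ do rewrite -mulrA mulr_suml.
  rewrite -mulr_sumr exchange_big /=; congr (_ * _); apply: eq_bigr => y _.
  by rewrite mulr_sumr; apply: eq_bigr => a _; rewrite -mulrA -chiD addrC.
rewrite (bigD1 x) //= [X in _ + X]big1 ?addr0; last first.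
  move=> y; case/andP=> yE yx; by rewrite hdual // mulr0.
under eq_bigr => a _ do rewrite subrr chi0.
rewrite sumr_const mulrC mulr_natr -mulr_natr -mulrA mulfV ?mulr1 //.
by rewrite pnatr_eq0 -lt0n card_gt0.
Qed.

End Chi.

End M1.
Import M1.

Module M2.
Local Open Scope ring_scope.

Lemma map_poly_polyE (R : nzRingType) (S : nzRingType) (f : R -> S) n (E : nat -> R) :
  f 0 = 0 -> map_poly f (\poly_(i < n) E i) = \poly_(i < n) f (E i).
Proof.
move=> f0; apply/polyP => k; rewrite coef_map_id0 // !coef_poly; case: ifP => _ //.
Qed.

Section Cyclo.
Variable p : nat.
Hypothesis pr : prime p.

Definition Phi : {poly rat} := \poly_(i < p) 1.

Lemma size_Phi : size Phi = p.
Proof. by rewrite /Phi size_poly_eq ?oner_eq0. Qed.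

Lemma Phi_neq0 : Phi != 0.
Proof. by rewrite -size_poly_eq0 size_Phi -lt0n prime_gt0. Qed.

Lemma hornerPhi (S : numFieldType) (x : S) :
  (map_poly (ratr : rat -> S) Phi).[x] = \sum_(i < p) x ^+ i.
Proof.
rewrite /Phi map_poly_polyE ?rmorph0 // horner_poly; apply: eq_bigr => i _.
by rewrite rmorph1 mul1r.
Qed.

Lemma rootPhi (S : numFieldType) (x : S) : x ^+ p = 1 -> x != 1 ->
  root (map_poly (ratr : rat -> S) Phi) x.
Proof.
move=> xp x1; rewrite /root hornerPhi.
have := subrX1 x p; rewrite xp subrr => /esym/eqP; rewrite mulf_eq0 subr_eq0.
by rewrite (negbTE x1).
Qed.

Lemma algC_Phi (z : algC) : p.-primitive_root z ->
  forall q : {poly rat}, root (map_poly ratr q) z = (Phi %| q).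
Proof.
move=> prz q.
have [m [Dm mon] dv] := minCpolyP z.
have szm : size m = p.
  rewrite -(size_map_poly (ratr : {rmorphism rat -> algC})) -Dm (minCpoly_cyclotomic prz) size_cyclotomic.
  by rewrite totient_prime // prednK // prime_gt0.
have z1 : z != 1.
  apply/eqP => ez; have := prim_order_dvd prz 1; rewrite ez expr1 eqxx dvdn1.
  by move/eqP => ep; move: (prime_gt1 pr); rewrite ep.
have mPhi : m %| Phi by rewrite -dv; apply: rootPhi => //; exact: prim_expr_order.
have : m %= Phi by rewrite -dvdp_size_eqp // szm size_Phi.
by move=> e; rewrite dv (eqp_dvdl _ e).
Qed.

Lemma Phi_dvd (S : numFieldType) (x : S) : x ^+ p = 1 -> x != 1 ->
  forall q : {poly rat}, root (map_poly ratr q) x -> Phi %| q.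
Proof.
move=> xp x1 q rq.
have [z prz] := C_prim_root_exists (prime_gt0 pr).
set g := gcdp q Phi.
have rg : root (map_poly ratr g) x.
  have [u /eqpP [[c1 c2] /andP [c1n0 c2n0] e]] := Bezoutp q Phi.
  have := congr1 (fun r => (map_poly (ratr : {rmorphism rat -> S}) r).[x]) e.
  rewrite /= !map_polyZ !hornerZ rmorphD !rmorphM /= hornerD !hornerM.
  rewrite (eqP rq) (eqP (rootPhi xp x1)) !mulr0 addr0 mulr0 => /esym/eqP.
  by rewrite mulf_eq0 fmorph_eq0 (negbTE c2n0) /root.
have /dvdpP [h Ph] : g %| Phi by exact: dvdp_gcdr.
have : root (map_poly (ratr : {rmorphism rat -> algC}) (h * g)) z.
  by rewrite -Ph (algC_Phi prz) dvdpp.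
rewrite rmorphM rootM => /orP [rh | rgz]; last first.
  by apply: (dvdp_trans _ (dvdp_gcdl q Phi)); rewrite -(algC_Phi prz).
exfalso.
have hn0 : h != 0 by apply: contra_neq Phi_neq0 => h0; rewrite Ph h0 mul0r.
have gn0 : g != 0 by apply: contra_neq Phi_neq0 => g0; rewrite Ph g0 mulr0.
rewrite (algC_Phi prz) in rh.
have le1 := dvdp_leq hn0 rh.
have es := size_mul hn0 gn0; rewrite -Ph in es.
have sg : (size g <= 1)%N.
  by move: le1; rewrite size_Phi in es; rewrite size_Phi es -subn1 leq_subLR [(1 + _)%N]addnC leq_add2l.
have gC := size1_polyC sg.
move: rg; rewrite gC map_polyC rootC fmorph_eq0 => /eqP g0.
by move: gn0; rewrite gC g0 eqxx.
Qed.


Lemma vanish (S : numFieldType) (x : S) : x ^+ p = 1 -> x != 1 ->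
  forall c : nat -> rat, \sum_(i < p) ratr (c i) * x ^+ i = 0 ->
  forall i, (i < p)%N -> c i = c 0%N.
Proof.
move=> xp x1 c hs.
pose q := \poly_(i < p) c i.
have qc i : (i < p)%N -> c i = q`_i by move=> ip; rewrite coef_poly ip.
have rq : root (map_poly (ratr : {rmorphism rat -> S}) q) x.
  by rewrite /root map_poly_polyE ?rmorph0 // horner_poly hs.
have /dvdpP [k qk] := Phi_dvd xp x1 rq.
have sk : (size k <= 1)%N.
  have [->|kn0] := eqVneq k 0; first by rewrite size_poly0.
  have := size_poly p c; rewrite -/q qk size_mul // ?Phi_neq0 // size_Phi.
  by rewrite -subn1 leq_subLR leq_add2r.
move=> i ip; rewrite (qc i ip) (qc 0%N (prime_gt0 pr)) qk (size1_polyC sk).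
by rewrite !coefCM /Phi !coef_poly ip prime_gt0.
Qed.
End Cyclo.

End M2.
Import M2.

Module M3.
Local Open Scope ring_scope.

Section Main.
Variable p : nat.
Hypothesis pr : prime p.
Hypothesis podd : odd p.

Definition lvl (X : {set pt p}) (xi : pt p) (k : 'F_p) :=
  #|[set x in X | dotp x xi == k]|.

Lemma sumS_lvl (X : {set pt p}) (xi : pt p) : \sum_(x in X) chi (dotp x xi) =
   \sum_(k : 'F_p) (lvl X xi k)%:R * chi k.
Proof.
rewrite (partition_big (fun x => dotp x xi) xpredT) //=.
apply: eq_bigr => k _.
rewrite (eq_bigr (fun _ => chi k)); last by move=> x /andP[_ /eqP->].
rewrite (eq_bigl (fun x => x \in [set x in X | dotp x xi == k])); last first.
  by move=> x; rewrite inE.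
by rewrite sumr_const mulr_natl.
Qed.

Lemma card_lvl (X : {set pt p}) (xi : pt p) : #|X| = (\sum_(k : 'F_p) lvl X xi k)%N.
Proof.
rewrite -sum1_card (partition_big (fun x => dotp x xi) xpredT) //=.
apply: eq_bigr => k _.
rewrite (eq_bigl (fun x => x \in [set x in X | dotp x xi == k])); last first.
  by move=> x; rewrite inE.
by rewrite sum1_card.
Qed.

Lemma sumN (G : nat -> Cx) N : N = p -> \sum_(i < N) G i = \sum_(i < p) G i.
Proof. by move->. Qed.

Lemma lvl_const (X : {set pt p}) (xi : pt p) : \sum_(x in X) chi (dotp x xi) = 0 ->
  forall k, lvl X xi k = lvl X xi 0.
Proof.
rewrite sumS_lvl => h.
pose z := chi (1 : 'F_p).
pose c (i : nat) : rat := (lvl X xi (i%:R))%:R.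
have hs : \sum_(i < p) ratr (c i) * z ^+ i = 0.
  have e := @sumN (fun i => ratr (c i) * z ^+ i) _ (Fp_cast pr); simpl in e; rewrite -e; apply: (etrans _ h).
  apply: eq_bigr => k _; rewrite /c ratr_nat natr_Zp /z -chi_val //.
have := vanish pr (chi1_p pr) (chi1_neq1 pr podd) hs => hc k.
have kp : (nat_of_ord k < p)%N.
  by move: (ltn_ord k); rewrite [X in (_ < X)%N -> _]Fp_cast.
have := hc _ kp; rewrite /c natr_Zp => /eqP; rewrite eqr_nat => /eqP.
done.
Qed.

Lemma lvl_inj (X : {set pt p}) (xi : pt p) : #|X| = p ->
  (forall k, lvl X xi k = lvl X xi 0) -> {in X &, injective (fun x => dotp x xi)}.
Proof.
move=> cX hk.
have l1 : lvl X xi 0 = 1%N.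
  move: cX; rewrite (card_lvl X xi) (eq_bigr (fun _ => lvl X xi 0)) //.
  rewrite sum_nat_const card_Fp // => /eqP.
  by rewrite -[X in _ == X]muln1 eqn_pmul2l ?prime_gt0 // => /eqP.
move=> x y xX yX /= e.
apply/eqP/negPn/negP => nxy.
have : (2 <= lvl X xi (dotp x xi))%N.
  have c2 : #|[set x; y]| = 2%N by rewrite cards2 nxy.
  rewrite -c2; apply: subset_leq_card; apply/subsetP => w.
  by rewrite !inE => /orP[]/eqP->; rewrite ?xX ?yX ?e eqxx.
by rewrite hk l1.
Qed.

End Main.

End M3.
Import M3.

Module M4.
Local Open Scope ring_scope.

Section Tile.
Variable p : nat.
Hypothesis pr : prime p.
Hypothesis podd : odd p.

Lemma dotpDl (x y a : pt p) : dotp (x + y) a = dotp x a + dotp y a.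
Proof. rewrite /dotp /=; ring. Qed.

Lemma dotpC (x a : pt p) : dotp x a = dotp a x.
Proof. rewrite /dotp; ring. Qed.

Lemma dotpBl (x y a : pt p) : dotp x a - dotp y a = dotp (x - y) a.
Proof. rewrite /dotp /=; ring. Qed.

Lemma sumT (G : pt p -> Cx) : \sum_(x in [set: pt p]) G x = \sum_x G x.
Proof. by apply: eq_bigl => x; rewrite inE. Qed.

Variables (E T : {set pt p}).
Hypothesis hT : forall v : pt p, exists! et : pt p * pt p,
      [/\ et.1 \in E, et.2 \in T & v = et.1 + et.2].

Let f (et : pt p * pt p) : pt p := et.1 + et.2.

Lemma f_inj : {in setX E T &, injective f}.
Proof.
move=> [e t] [e' t']; rewrite !inE /= => /andP[eE tT] /andP[eE' tT'] ef.
have [x [_ ux]] := hT (f (e, t)).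
rewrite -(ux (e, t)) ?(ux (e', t')) //; split => //.
Qed.

Lemma f_surj : [set f x | x in setX E T] = setT.
Proof.
apply/eqP; rewrite eqEsubset subsetT /=; apply/subsetP => v _.
have [[e t] [[/= eE tT ->] _]] := hT v.
by apply/imsetP; exists (e, t) => //; rewrite inE eE tT.
Qed.

Lemma tile_card : (#|E| * #|T| = p * p)%N.
Proof.
by rewrite -cardsX -(card_in_imset f_inj) f_surj cardsT card_prod card_Fp.
Qed.

Lemma tile_prod (xi : pt p) : \sum_(v : pt p) chi (dotp v xi) =
  (\sum_(e in E) chi (dotp e xi)) * (\sum_(t in T) chi (dotp t xi)).
Proof.
rewrite -sumT -f_surj big_imset /=; last exact: f_inj.
rewrite big_distrlr /= pair_big_dep /=.
apply: eq_big => [[e t]|[e t] _]; first by rewrite inE.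
by rewrite /f dotpDl chiD.
Qed.

End Tile.

End M4.
Import M4.

Local Open Scope ring_scope.
Local Open Scope ring_scope.

Theorem mainTheorem4 (p : nat) (E : {set pt p}) :
  prime p -> odd p -> tiles E -> spectral E.
Proof.
move=> pr podd [T hT].
have cET := tile_card pr hT.
have : (#|E| %| p ^ 2)%N by rewrite expnS expn1 -cET dvdn_mulr.
case/(dvdn_pfactor _ _ pr) => m m2 eE.
case: m m2 eE => [|[|[|m]]] //= _ eE.
-
  move/eqP: eE; rewrite expn0 => /cards1P [e ->].
  apply: (spectral_crit pr (E := [set e]) (A := [set 0 : pt p])).
  + by apply/set0Pn; exists 0; rewrite inE.
  + by move=> a a'; rewrite !inE => /eqP-> /eqP->; rewrite eqxx.
  + by move=> x y; rewrite !inE => /eqP-> /eqP->; rewrite eqxx.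
-
  rewrite expn1 in eE.
  have cT : #|T| = p.
    by move: cET; rewrite eE => /eqP; rewrite eqn_pmul2l ?prime_gt0 // => /eqP.
  have four (xi : pt p) : xi != 0 ->
      (\sum_(x in E) chi (dotp x xi)) * (\sum_(x in T) chi (dotp x xi)) = 0.
    by move=> xin0; rewrite -(tile_prod pr hT) sum_dot0.
  have [xi xin0 hxi] : exists2 xi : pt p, xi != 0 & \sum_(x in E) chi (dotp x xi) = 0.
    case: (boolP [exists xi : pt p, (xi != 0) && (\sum_(x in E) chi (dotp x xi) == 0)]).
      by case/existsP => xi /andP[? /eqP ?]; exists xi.
    move/existsPn => hno; exfalso.
    have : (1 < #|T|)%N by rewrite cT prime_gt1.
    case/card_gt1P => t [t' [tT t'T tt']].
    have [d dE] : exists d, d = t - t' by eexists.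
    have xin0 : ((- d.2, d.1) : pt p) != 0.
      apply: contra tt'; rewrite xpair_eqE oppr_eq0 => /andP[h2 h1].
      rewrite -subr_eq0 -dE [d]surjective_pairing (eqP h1) (eqP h2) //.
    have hST : \sum_(x in T) chi (dotp x (- d.2, d.1)) = 0.
      have := four _ xin0; move/eqP; rewrite mulf_eq0 => /orP[/eqP h|/eqP //].
      by have := hno (- d.2, d.1); rewrite xin0 h eqxx.
    have := lvl_inj pr cT (lvl_const pr podd hST) tT t'T.
    have -> : dotp t (- d.2, d.1) = dotp t' (- d.2, d.1).
      by apply/eqP; rewrite -subr_eq0 dotpBl -dE /dotp /=; apply/eqP; ring.
    by move=> /(_ erefl) tt; rewrite tt eqxx in tt'.
  have inj := lvl_inj pr eE (lvl_const pr podd hxi).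
  pose mk (t : 'F_p) : pt p := (t * xi.1, t * xi.2).
  have mk_inj : injective mk.
    move=> t t' /eqP; rewrite /mk xpair_eqE => /andP[/eqP h1 /eqP h2].
    apply/eqP; apply: contraR xin0 => tt.
    have u : t - t' != 0 by rewrite subr_eq0.
    have e1 : xi.1 = 0 by apply: (mulfI u); rewrite mulr0 mulrBl h1 subrr.
    have e2 : xi.2 = 0 by apply: (mulfI u); rewrite mulr0 mulrBl h2 subrr.
    by rewrite [xi]surjective_pairing e1 e2.
  apply: (spectral_crit pr (E := E) (A := [set mk t | t : 'F_p])).
  + by apply/set0Pn; exists (mk 0); apply/imsetP; exists 0.
  + move=> a a' /imsetP [t _ ->] /imsetP [t' _ ->] ne.
    have tt : t - t' != 0 by rewrite subr_eq0; apply: contraNneq ne => ->.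
    have -> : \sum_(x in E) chi (dotp x (mk t - mk t')) =
              \sum_(x in E) chi (dotp x xi * (t - t')).
      by apply: eq_bigr => x _; congr chi; rewrite /dotp /mk /=; ring.
    have imE : [set dotp x xi | x in E] = setT.
      by apply/eqP; rewrite eqEcard subsetT cardsT (card_in_imset inj) eE card_Fp //= leqnn.
    transitivity (\sum_(u in [set dotp x xi | x in E]) chi (u * (t - t'))).
      by rewrite big_imset //=.
    rewrite imE (eq_bigl xpredT) ?(sum_chiM pr podd tt) //; by move=> u; rewrite inE.
  + move=> x y xE yE yx.
    rewrite (big_imset (fun a => chi (dotp x a - dotp y a))) /=; last first.
      by move=> ? ? _ _; exact: mk_inj.
    have dn0 : dotp x xi - dotp y xi != 0.
      rewrite subr_eq0; apply: contra_neq yx => e.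
      by apply: inj => //; rewrite e.
    rewrite (eq_bigr (fun t => chi (t * (dotp x xi - dotp y xi)))).
      by rewrite (eq_bigl xpredT) ?(sum_chiM pr podd dn0) //; by move=> u; rewrite inE.
    by move=> t _; congr chi; rewrite /dotp /mk /=; ring.
-
  have -> : E = setT.
    apply/eqP; rewrite eqEcard subsetT cardsT card_prod card_Fp // eE.
    by rewrite /= expnS expn1.
  apply: (spectral_crit pr (A := [set: pt p])).
  + by apply/set0Pn; exists 0; rewrite inE.
  + move=> a a' _ _ aa; rewrite (sumT (fun x => chi (dotp x (a - a')))).
    by apply: sum_dot0 => //; rewrite subr_eq0.
  + move=> x y _ _ yx; rewrite (eq_bigr (fun a => chi (dotp a (x - y)))).
      by rewrite sumT sum_dot0 // subr_eq0 eq_sym.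
    by move=> a _; rewrite dotpBl dotpC.
Qed.
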